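(* For a veering triangulation $\tau$ of $M$, there is a surjective $\mathbb{Z}[G]$-module homomorphism $\mathcal{E}(\tilde\tau)\to\mathcal{E}^\triangle(\tilde\tau)$ (induced by the identity on the free module on edges of $\tilde\tau$), and consequently $\Theta_\tau$ divides $V_\tau$ in $\mathbb{Z}[G]$.
   Context: $\tau$ is a veering triangulation of $M$ (taut ideal triangulation with cooriented faces, each tetrahedron having two bottom and two top faces, a bottom edge, a top edge and four side edges, angle sum $2\pi$ around edges, with a consistent right/left veer on edges modelled on a thickened rhombus whose side edges of positive slope are right-veering and of negative slope left-veering). $E$, $F$ denote the sets of edges and faces of $\tau$. $G=H_1(M;\mathbb{Z})/\mathrm{torsion}$, $\hat M$ the corresponding (universal free abelian) cover with deck group $G$, $\tilde\tau$ the lifted triangulation. Tetrahedron relation of a tetrahedron with bottom edge $\mathbf b$, top edge $\mathbf t$: $\mathbf b=\mathbf t+\mathbf s_1+\mathbf s_2$ where $\mathbf s_1,\mathbf s_2$ are the side edges of veer opposite to $\mathbf t$. Face relation of a face $f$: $\mathbf b=\mathbf x+\mathbf y$ where $\mathbf b$ is the bottom edge of the unique tetrahedron having $f$ as a bottom face and $\mathbf x,\mathbf y$ are the other edges of $f$. The edge module $\mathcal{E}(\tilde\tau)$ is the free $\mathbb{Z}$-module on edges of $\tilde\tau$ modulo the tetrahedron relations of all tetrahedra of $\tilde\tau$; choosing lifts of edges it is the cokernel of $L:\mathbb{Z}[G]^E\to\mathbb{Z}[G]^E$ sending each edge $\mathbf b$ to $\mathbf b-(\mathbf t+\mathbf s_1+\mathbf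 s_2)$ for the tetrahedron above it, and the veering polynomial is $V_\tau=\det L\in\mathbb{Z}[G]$. The face module $\mathcal{E}^\triangle(\tilde\tau)$ is the free module on edges of $\tilde\tau$ modulo all face relations, i.e. the cokernel of $L^\triangle:\mathbb{Z}[G]^F\to\mathbb{Z}[G]^E$, $f\mapsto \mathbf b-(\mathbf x+\mathbf y)$; the taut polynomial $\Theta_\tau$ is the gcd of the $|E|\times|E|$ minors of $L^\triangle$, defined up to a unit $\pm g$. *)

(* Defs.v *)
From HB Require Import structures.
From mathcomp Require Import all_boot all_order all_algebra all_fingroup.
From mathcomp Require Import fraction.
From mathcomp Require Import mpoly.

Set Implicit Arguments.
Unset Strict Implicit.
Unset Printing Implicit Defensive.

Import Order.TTheory GRing.Theory Num.Theory.
Local Open Scope ring_scope.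

(* Each tetrahedron has its four (ideal) vertices labelled N,E,S,W           *)
(* (= 0,1,2,3).  Viewed from above (rhombus model) the bottom edge is NS,     *)
(* the top edge is EW, the side edges are NE, ES, SW, WN.  The vertex         *)
(* labelling of each tetrahedron fixes its orientation.                      *)
(* Faces of a tetrahedron are indexed by the omitted vertex: the faces        *)
(* omitting E or W contain NS (bottom faces), the faces omitting N or S       *)
(* contain EW (top faces).                                                   *)

Definition vN : 'I_4 := @Ordinal 4 0 isT.
Definition vE : 'I_4 := @Ordinal 4 1 isT.
Definition vS : 'I_4 := @Ordinal 4 2 isT.
Definition vW : 'I_4 := @Ordinal 4 3 isT.

Record triangulation_data (T Ed F : finType) := TriData {
  tedge : T -> 'I_4 -> 'I_4 -> Ed;
  tface : T -> 'I_4 -> F;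
  (* each face f is a top face of lowT f (opposite vertex lowv f) ... *)
  lowT : F -> T;
  lowv : F -> 'I_4;
  (* ... and a bottom face of upT f (opposite vertex upv f) *)
  upT : F -> T;
  upv : F -> 'I_4;
  (* face pairing: vertex a of lowT f is glued to vertex glue f a of upT f *)
  glue : F -> {perm 'I_4};
  (* veer of edges: true = right-veering, false = left-veering *)
  veer : Ed -> bool
}.

Section Veering.
Variables (T Ed F : finType) (D : triangulation_data T Ed F).

(* oriented edge occurrences (t, a, b) *)
Definition occ := (T * 'I_4 * 'I_4)%type.

(* the face gluing along f identifies the occurrence o (in lowT f) with o'
   (in upT f) *)
Definition glue_step (f : F) (o o' : occ) : bool :=
  [&& o.1.1 == lowT D f, o'.1.1 == upT D f,
      o.1.2 != lowv D f, o.2 != lowv D f,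
      o'.1.2 == glue D f o.1.2 & o'.2 == glue D f o.2].

Definition glue_rel : rel occ :=
  fun o o' => [exists f, glue_step f o o' || glue_step f o' o].

Definition dual_adj : rel T :=
  fun t t' => [exists f, ((lowT D f == t) && (upT D f == t'))
                       || ((lowT D f == t') && (upT D f == t))].

Definition side_edges : seq ('I_4 * 'I_4) :=
  [:: (vN, vE); (vE, vS); (vS, vW); (vW, vN)].

Definition is_veering : Prop :=
  (forall t a b, tedge D t a b = tedge D t b a) /\
  (* each face is a top face of exactly one tetrahedron and a bottom face of
     exactly one tetrahedron (coorientation of faces) *)
  (forall f, tface D (lowT D f) (lowv D f) = f /\
             ((lowv D f == vN) || (lowv D f == vS))) /\
  (forall f, tface D (upT D f) (upv D f) = f /\
             ((upv D f == vE) || (upv D f == vW))) /\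
  (forall f t v, tface D t v = f ->
      (t, v) = (lowT D f, lowv D f) \/ (t, v) = (upT D f, upv D f)) /\
  (* face pairings: omitted vertex to omitted vertex, orientation reversing *)
  (forall f, glue D f (lowv D f) = upv D f) /\
  (forall f, odd_perm (glue D f)) /\
  (* the edges of the triangulation are exactly the classes of edge
     occurrences under the face identifications *)
  (forall (t t' : T) (a b a' b' : 'I_4), a != b -> a' != b' ->
      (tedge D t a b = tedge D t' a' b' <->
       connect glue_rel (t, a, b) (t', a', b') \/
       connect glue_rel (t, a, b) (t', b', a'))) /\
  (* no edge is identified with itself in reverse (M is a manifold) *)
  (forall t (a b : 'I_4), a != b -> ~ connect glue_rel (t, a, b) (t, b, a)) /\
  (* M is connected *)
  (forall t t', connect dual_adj t t') /\
  (* taut: angle sum 2pi around each edge, i.e. each edge is the bottom edge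
     of exactly one tetrahedron and the top edge of exactly one *)
  bijective (fun t => tedge D t vN vS) /\
  bijective (fun t => tedge D t vE vW) /\
  (* veering: side edges of negative slope (NE, SW) are left-veering and side
     edges of positive slope (ES, WN) are right-veering *)
  (forall t, veer D (tedge D t vN vE) = false /\ veer D (tedge D t vS vW) = false
          /\ veer D (tedge D t vE vS) = true /\ veer D (tedge D t vW vN) = true).

(* Integer 1-cochains on the dual 2-complex (a spine of M) are functions      *)
(* F -> int (the dual edge of f goes from lowT f to upT f).                   *)

(* eta is a cocycle: it has a potential along every edge cycle *)
Definition cocycle (eta : F -> int) : Prop :=
  exists mu : T -> 'I_4 -> 'I_4 -> int,
    (forall t a b, mu t a b = mu t b a) /\
    (forall f a b, a != lowv D f -> b != lowv D f -> a != b ->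
       mu (lowT D f) a b = eta f + mu (upT D f) (glue D f a) (glue D f b)).

Definition coboundary (eta : F -> int) : Prop :=
  exists h : T -> int, forall f, eta f = h (upT D f) - h (lowT D f).

(* the coordinates of omega form a Z-basis of H^1(M;Z) = Hom(H_1(M), Z);
   equivalently c |-> (omega_i(c))_i induces H_1(M;Z)/torsion ~= Z^r *)
Definition H1_basis (r : nat) (omega : F -> 'rV[int]_r) : Prop :=
  (forall i, cocycle (fun f => omega f ord0 i)) /\
  (forall eta, cocycle eta ->
     exists! k : 'rV[int]_r,
       coboundary (fun f => eta f - \sum_(i < r) k ord0 i * omega f ord0 i)).

(* lam gives the lifted triangulation: choosing a lift of each tetrahedron
   and of each edge e, the copy of the edge occurrence (t,a,b) in the chosen
   lift of t is (lam t a b) . e~ ; the lift of lowT f is glued along f to the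
   (omega f)-translate of the lift of upT f. *)
Definition lift_data (r : nat) (omega : F -> 'rV[int]_r)
    (lam : T -> 'I_4 -> 'I_4 -> 'rV[int]_r) : Prop :=
  (forall t a b, lam t a b = lam t b a) /\
  (forall f a b, a != lowv D f -> b != lowv D f -> a != b ->
     lam (lowT D f) a b = omega f + lam (upT D f) (glue D f a) (glue D f b)).

End Veering.

(* The group ring Z[G], G = Z^r, realised as the ring of Laurent polynomials  *)
(* Z[X_1^(+-1), ..., X_r^(+-1)] inside the fraction field of Z[X_1..X_r].     *)

Definition KG (r : nat) := {fraction {mpoly int[r]}}.

Definition toKG (r : nat) (p : {mpoly int[r]}) : KG r :=
  @FracField.tofrac _ p.

Definition mono (r : nat) (g : 'rV[int]_r) : KG r :=
  \prod_(i < r) toKG ('X_i : {mpoly int[r]}) ^ (g ord0 i).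

Definition inZG (r : nat) (x : KG r) : Prop :=
  exists (p : {mpoly int[r]}) (g : 'rV[int]_r), x = toKG p * mono g.

Definition dvdZG (r : nat) (x y : KG r) : Prop :=
  exists q : KG r, inZG q /\ y = x * q.

Definition is_gcdZG (r : nat) (S : KG r -> Prop) (theta : KG r) : Prop :=
  inZG theta /\ (forall m, S m -> dvdZG theta m) /\
  (forall d, inZG d -> (forall m, S m -> dvdZG d m) -> dvdZG d theta).

Section Matrices.
Variables (T Ed F : finType) (D : triangulation_data T Ed F).
Variables (r : nat) (lam : T -> 'I_4 -> 'I_4 -> 'rV[int]_r).

Local Notation ind b := ((b : bool)%:R : KG r).

(* coefficient of e~ in the image of b~ under L : the tetrahedron relation of
   the (lift of the) tetrahedron t above b (b = bottom edge NS of t):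
   b = t_top + s_1 + s_2, s_i the side edges of veer opposite to t_top *)
Definition Lcoef (b e : Ed) : KG r :=
  ind (b == e) -
  \sum_(t | tedge D t vN vS == b)
     (ind (e == tedge D t vE vW) * mono (lam t vE vW - lam t vN vS) +
      \sum_(p <- side_edges | veer D (tedge D t p.1 p.2) != veer D (tedge D t vE vW))
         ind (e == tedge D t p.1 p.2) * mono (lam t p.1 p.2 - lam t vN vS)).

(* coefficient of e~ in the image of the face f under L^triangle:
   b - (x + y), b the bottom edge of the tetrahedron upT f having f as a
   bottom face, x, y the other edges of f *)
Definition Ltricoef (f : F) (e : Ed) : KG r :=
  let t := upT D f in
  let c := if upv D f == vE then vW else vE in
  ind (e == tedge D t vN vS)
  - ind (e == tedge D t vN c) * mono (lam t vN c - lam t vN vS)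
  - ind (e == tedge D t vS c) * mono (lam t vS c - lam t vN vS).

(* matrices act on row vectors: row i is the image of the i-th basis vector *)
Definition Lmx : 'M[KG r]_(#|Ed|) :=
  \matrix_(i, j) Lcoef (enum_val i) (enum_val j).

Definition Ltrimx : 'M[KG r]_(#|F|, #|Ed|) :=
  \matrix_(i, j) Ltricoef (enum_val i) (enum_val j).

Definition veering_poly : KG r := \det Lmx.

Definition Ltri_minor (m : KG r) : Prop :=
  exists s : 'I_#|Ed| -> 'I_#|F|, injective s /\ m = \det (rowsub s Ltrimx).

End Matrices.

(* Main.v *)
Require Import Defs.
From HB Require Import structures.
From mathcomp Require Import all_boot all_order all_algebra all_fingroup.
From mathcomp Require Import fraction.
From mathcomp Require Import mpoly.
From mathcomp Require Import ring.
Import Order.TTheory GRing.Theory Num.Theory.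
Local Open Scope ring_scope.



Lemma det_mul_expand (R : comRingType) n m (C : 'M[R]_(n,m)) (A : 'M[R]_(m,n)) :
  \det (C *m A) = \sum_(f : {ffun 'I_n -> 'I_m}) (\prod_i C i (f i)) * \det (rowsub f A).
Proof.
transitivity (\sum_(s : 'S_n) (-1) ^+ s * \sum_(f : {ffun 'I_n -> 'I_m})
     \prod_i (C i (f i) * A (f i) (s i))).
  apply: eq_bigr => s _; congr (_ * _).
  rewrite -(bigA_distr_bigA (fun i j => C i j * A j (s i))).
  by apply: eq_bigr => i _; rewrite mxE.
under eq_bigr do rewrite big_distrr.
rewrite exchange_big; apply: eq_bigr => f _ /=.
rewrite /determinant big_distrr; apply: eq_bigr => s _ /=.
rewrite big_split /= mulrCA; congr (_ * (_ * _)).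
by apply: eq_bigr => i _; rewrite mxE.
Qed.

Section ZG.
Variable r : nat.
Local Notation K := (KG r).

Definition Xv (i : 'I_r) : K := toKG ('X_i : {mpoly int[r]}).

Lemma Xv_neq0 i : Xv i != 0.
Proof.
rewrite /Xv /toKG tofrac_eq0; apply/eqP => H.
by have := @mcoeffXU r int i i; rewrite H mcoeff0 eqxx.
Qed.

Lemma monoD (a b : 'rV[int]_r) : mono (a + b) = mono a * mono b.
Proof.
rewrite /mono -big_split /=; apply: eq_bigr => i _.
by rewrite mxE expfzDr // Xv_neq0.
Qed.

Lemma mono0 : mono (0 : 'rV[int]_r) = 1.
Proof. by rewrite /mono big1 // => i _; rewrite mxE expr0z. Qed.

Lemma mono_nneg (d : 'rV[int]_r) : (forall i, 0 <= d ord0 i) ->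
  mono d = toKG (\prod_i 'X_i ^+ `|d ord0 i|%N).
Proof.
move=> H; rewrite /toKG rmorph_prod; apply: eq_bigr => i _.
by rewrite rmorphXn -{1}(gez0_abs (H i)).
Qed.

Lemma inZG_mono (g : 'rV[int]_r) : inZG (mono g).
Proof. by exists 1, g; rewrite /toKG rmorph1 mul1r. Qed.

Lemma inZG_toKG (p : {mpoly int[r]}) : inZG (toKG p).
Proof. by exists p, 0; rewrite mono0 mulr1. Qed.

Lemma inZG0 : inZG (0 : K).
Proof. by have := inZG_toKG 0; rewrite /toKG rmorph0. Qed.

Lemma inZG1 : inZG (1 : K).
Proof. by have := inZG_mono 0; rewrite mono0. Qed.

Lemma inZG_mul (x y : K) : inZG x -> inZG y -> inZG (x * y).
Proof.
move=> [p [g ->]] [q [h ->]]; exists (p * q), (g + h).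
by rewrite monoD /toKG rmorphM; rewrite mulrACA.
Qed.

Lemma inZG_opp (x : K) : inZG x -> inZG (- x).
Proof. by move=> [p [g ->]]; exists (- p), g; rewrite /toKG rmorphN mulNr. Qed.

Lemma inZG_add (x y : K) : inZG x -> inZG y -> inZG (x + y).
Proof.
move=> [p [g ->]] [q [h ->]].
pose k : 'rV[int]_r := \row_j Num.min (g ord0 j) (h ord0 j).
have Hg : mono g = mono (g - k) * mono k by rewrite -monoD subrK.
have Hh : mono h = mono (h - k) * mono k by rewrite -monoD subrK.
rewrite Hg Hh (@mono_nneg (g - k)); last first.
  by move=> i; rewrite !mxE subr_ge0 ge_min lexx.
rewrite (@mono_nneg (h - k)); last first.
  by move=> i; rewrite !mxE subr_ge0 ge_min lexx orbT.
eexists; exists k; rewrite /toKG !mulrA -!rmorphM -mulrDl -rmorphD; reflexivity.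
Qed.

Lemma inZG_sum (I : Type) (s : seq I) (P : pred I) (F : I -> K) :
  (forall i, P i -> inZG (F i)) -> inZG (\sum_(i <- s | P i) F i).
Proof. by move=> H; apply: big_ind => //; [exact: inZG0 | exact: inZG_add]. Qed.

Lemma inZG_prod (I : Type) (s : seq I) (P : pred I) (F : I -> K) :
  (forall i, P i -> inZG (F i)) -> inZG (\prod_(i <- s | P i) F i).
Proof. by move=> H; apply: big_ind => //; [exact: inZG1 | exact: inZG_mul]. Qed.

Lemma inZG_det n (A : 'M[K]_n) : (forall i j, inZG (A i j)) -> inZG (\det A).
Proof.
move=> H; apply: inZG_sum => s _; apply: inZG_mul.
  by case: (odd_perm s); rewrite ?expr1 ?expr0; [apply: inZG_opp|]; exact: inZG1.
by apply: inZG_prod.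
Qed.

Lemma dvdZG0 (t : K) : dvdZG t 0.
Proof. by exists 0; split; [exact: inZG0 | rewrite mulr0]. Qed.

Lemma dvdZG_sum (t : K) (I : Type) (s : seq I) (P : pred I) (F : I -> K) :
  (forall i, P i -> dvdZG t (F i)) -> dvdZG t (\sum_(i <- s | P i) F i).
Proof.
move=> H; apply: big_ind => //; first exact: dvdZG0.
move=> x y [a [Ha ->]] [b [Hb ->]]; exists (a + b); split; last by rewrite mulrDr.
exact: inZG_add.
Qed.

Lemma dvdZG_mull (t a x : K) : inZG a -> dvdZG t x -> dvdZG t (a * x).
Proof.
move=> Ha [q [Hq ->]]; exists (a * q); split; first exact: inZG_mul.
by rewrite mulrCA.
Qed.

End ZG.

Definition sidev (x y : 'I_4) : option bool :=
  match nat_of_ord x, nat_of_ord y with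
  | 0,1 | 1,0 | 2,3 | 3,2 => Some false
  | 1,2 | 2,1 | 3,0 | 0,3 => Some true
  | _,_ => None end.
Definition compat x y (v : bool) := sidev x y != Some (~~ v).

Lemma ord4 (x : 'I_4) : [\/ x = vN, x = vE, x = vS | x = vW].
Proof.
have := ltn_ord x; case: x => [[|[|[|[|m]]]] H] _ //;
 [constructor 1|constructor 2|constructor 3|constructor 4]; exact: val_inj.
Qed.

Lemma odd_ext (g p : {perm 'I_4}) : (forall x, g x = p x) -> odd_perm g = odd_perm p.
Proof. by move=> H; congr odd_perm; apply/permP. Qed.

Lemma perm_cases (g : {perm 'I_4}) (vt : bool) :
  odd_perm g -> (g vN == vE) || (g vN == vW) ->
  compat (g vE) (g vS) true -> compat (g vS) (g vW) false -> compat (g vE) (g vW) vt ->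
  if vt then
    (g vN = vE /\ g vE = vN /\ g vS = vS /\ g vW = vW) \/
    (g vN = vW /\ g vE = vS /\ g vS = vN /\ g vW = vE)
  else
    (g vN = vE /\ g vE = vW /\ g vS = vN /\ g vW = vS) \/
    (g vN = vW /\ g vE = vE /\ g vS = vS /\ g vW = vN).
Proof.
move=> od hN c1 c2 c3.
have inj := @perm_inj _ g.
have e1 : odd_perm (tperm vN vE * tperm vS vW) = false by rewrite odd_permM !odd_tperm.
have e2 : odd_perm (tperm vN vW * tperm vE vS) = false by rewrite odd_permM !odd_tperm.
case: (ord4 (g vN)) => HN; case: (ord4 (g vE)) => HE; case: (ord4 (g vS)) => HS;
case: (ord4 (g vW)) => HW; rewrite ?HN ?HE ?HS ?HW in hN c1 c2 c3 *;
case: vt c3 => c3 //;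
try (by left); try (by right);
try (by move: (inj vN vE); rewrite HN HE => /(_ erefl));
try (by move: (inj vN vS); rewrite HN HS => /(_ erefl));
try (by move: (inj vN vW); rewrite HN HW => /(_ erefl));
try (by move: (inj vE vS); rewrite HE HS => /(_ erefl));
try (by move: (inj vE vW); rewrite HE HW => /(_ erefl));
try (by move: (inj vS vW); rewrite HS HW => /(_ erefl)).
all: exfalso; move: od;
 first [ rewrite (@odd_ext g (tperm vN vE * tperm vS vW)) ?e1 //;
         move=> x; case: (ord4 x) => ->; rewrite permM !permE /=; by rewrite ?HN ?HE ?HS ?HW
       | rewrite (@odd_ext g (tperm vN vW * tperm vE vS)) ?e2 //;
         move=> x; case: (ord4 x) => ->; rewrite permM !permE /=; by rewrite ?HN ?HE ?HS ?HW ].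
Qed.

Lemma tetra_rel (T Ed F : finType) (D : triangulation_data T Ed F)
    (r : nat) (omega : F -> 'rV[int]_r) (lam : T -> 'I_4 -> 'I_4 -> 'rV[int]_r) :
  is_veering D -> lift_data D omega lam -> forall (t : T) (e : Ed),
  Ltricoef D lam (tface D t (if veer D (tedge D t vE vW) then vW else vE)) e +
  mono (if veer D (tedge D t vE vW) then lam t vE vS - lam t vN vS
        else lam t vS vW - lam t vN vS) * Ltricoef D lam (tface D t vN) e
  = ((tedge D t vN vS == e)%:R : KG r) -
    (((e == tedge D t vE vW)%:R : KG r) * mono (lam t vE vW - lam t vN vS) +
      \sum_(p <- side_edges | veer D (tedge D t p.1 p.2) != veer D (tedge D t vE vW))
         ((e == tedge D t p.1 p.2)%:R : KG r) * mono (lam t p.1 p.2 - lam t vN vS)).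
Proof.
move=> [Hsym [Hlow [Hup [Hface [Hglue [Hodd [Hedge [Hnorev [Hconn [_ [_ Hveer]]]]]]]]]]].
move=> [Hlsym Hlam] t e.

have [vNE [vSW [vES vWN]]] := Hveer t.
move Hf2: (tface D t vN) => f2.
have [Hl2t Hl2v] : lowT D f2 = t /\ lowv D f2 = vN.
  case: (Hface _ _ _ Hf2) => [[<- <-] // | [_ Hv]].
  by have := (Hup f2).2; rewrite -Hv.
move Hu: (upT D f2) => u; move Hg: (glue D f2) => g.
have HgN : g vN = upv D f2 by rewrite -Hg -Hl2v Hglue.
have Htr : forall a b, a != vN -> b != vN -> a != b ->
    tedge D u (g a) (g b) = tedge D t a b.
  move=> a b ha hb hab; symmetry; apply/(Hedge t u a b (g a) (g b) hab).
    by rewrite (inj_eq (@perm_inj _ g)).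
  left; apply: connect1; apply/existsP; exists f2; apply/orP; left.
  by rewrite /glue_step /= Hl2t Hu Hl2v Hg ha hb !eqxx.
have Hlm : forall a b, a != vN -> b != vN -> a != b ->
    lam u (g a) (g b) = lam t a b - omega f2.
  move=> a b ha hb hab; rewrite -Hl2t (Hlam f2 a b) ?Hl2v // Hu Hg.
  by rewrite [omega f2 + _]addrC addrK.
have Hm : forall a b a' b', a != vN -> b != vN -> a != b ->
    a' != vN -> b' != vN -> a' != b' ->
    mono (lam t a' b' - lam t vN vS) * mono (lam u (g a) (g b) - lam u (g a') (g b'))
    = mono (lam t a b - lam t vN vS).
  move=> a b a' b' ha hb hab ha' hb' hab'; rewrite !Hlm // -monoD; congr mono.
  by apply/matrixP => i j; rewrite !mxE; ring.
have Hsv : forall x y w, sidev x y = Some w -> veer D (tedge D u x y) = w.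
  have [uNE [uSW [uES uWN]]] := Hveer u.
  move=> x y w; case: (ord4 x) => ->; case: (ord4 y) => -> //= [<-];
  by rewrite ?uNE ?uSW ?uES ?uWN // Hsym ?uNE ?uSW ?uES ?uWN.
have Hcomp : forall a b v, a != vN -> b != vN -> a != b ->
    veer D (tedge D t a b) = v -> compat (g a) (g b) v.
  move=> a b v ha hb hab hv; rewrite /compat; case E: (sidev _ _) => [w|] //.
  by have := Hsv _ _ _ E; rewrite Htr // hv => vw; rewrite -vw; case: (v).
have Hperm := @perm_cases g (veer D (tedge D t vE vW)).
have := Hperm; rewrite -Hg Hodd Hg HgN (Hup f2).2 => /(_ isT isT).
move=> /(_ (Hcomp vE vS true isT isT isT vES)).
move=> /(_ (Hcomp vS vW false isT isT isT vSW)).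
move=> /(_ (Hcomp vE vW _ isT isT isT erefl)) {Hperm}.
have EWE : (vW == vE) = false by [].
have EEE : (vE == vE) = true by [].
case Hvt: (veer D (tedge D t vE vW)).
- move Hf1: (tface D t vW) => f1.
  have [Hu1 Hv1] : upT D f1 = t /\ upv D f1 = vW.
    case: (Hface _ _ _ Hf1) => [[_ Hv] | [<- <-] //].
    by have := (Hlow f1).2; rewrite -Hv.
  rewrite /Ltricoef /= Hu1 Hv1 Hu -HgN EWE /side_edges !big_cons big_nil /=.
  rewrite ?vNE ?vES ?vSW ?vWN ?Hvt /=.
  case=> [[gN [gE [gS gW]]] | [gN [gE [gS gW]]]]; rewrite gN ?EWE ?EEE.
  + move: (Htr vE vS isT isT isT) (Htr vE vW isT isT isT) (Htr vS vW isT isT isT)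
       (Hm vE vW vE vS isT isT isT isT isT isT) (Hm vS vW vE vS isT isT isT isT isT isT).
    rewrite ?gN ?gE ?gS ?gW => e0 e1 e2 m1 m2.
    rewrite ?(Hsym t vW vE) ?(Hsym t vS vE) ?(Hsym t vW vS) ?(Hsym t vE vN) ?(Hsym t vW vN) ?(Hsym t vS vN) ?(Hlsym t vW vE) ?(Hlsym t vS vE) ?(Hlsym t vW vS) ?(Hlsym t vE vN) ?(Hlsym t vW vN) ?(Hlsym t vS vN) in e0 e1 e2 m1 m2 *.
    rewrite e0 e1 e2 -m1 -m2 [tedge D t vN vS == e]eq_sym; ring.
  + move: (Htr vS vE isT isT isT) (Htr vS vW isT isT isT) (Htr vE vW isT isT isT)
       (Hm vS vW vS vE isT isT isT isT isT isT) (Hm vE vW vS vE isT isT isT isT isT isT).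
    rewrite ?gN ?gE ?gS ?gW => e0 e1 e2 m1 m2.
    rewrite ?(Hsym t vW vE) ?(Hsym t vS vE) ?(Hsym t vW vS) ?(Hsym t vE vN) ?(Hsym t vW vN) ?(Hsym t vS vN) ?(Hlsym t vW vE) ?(Hlsym t vS vE) ?(Hlsym t vW vS) ?(Hlsym t vE vN) ?(Hlsym t vW vN) ?(Hlsym t vS vN) in e0 e1 e2 m1 m2 *.
    rewrite e0 e1 e2 -m1 -m2 [tedge D t vN vS == e]eq_sym; ring.
- move Hf1: (tface D t vE) => f1.
  have [Hu1 Hv1] : upT D f1 = t /\ upv D f1 = vE.
    case: (Hface _ _ _ Hf1) => [[_ Hv] | [<- <-] //].
    by have := (Hlow f1).2; rewrite -Hv.
  rewrite /Ltricoef /= Hu1 Hv1 Hu -HgN EEE /side_edges !big_cons big_nil /=.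
  rewrite ?vNE ?vES ?vSW ?vWN ?Hvt /=.
  case=> [[gN [gE [gS gW]]] | [gN [gE [gS gW]]]]; rewrite gN ?EWE ?EEE.
  + move: (Htr vS vW isT isT isT) (Htr vS vE isT isT isT) (Htr vW vE isT isT isT)
       (Hm vS vE vS vW isT isT isT isT isT isT) (Hm vW vE vS vW isT isT isT isT isT isT).
    rewrite ?gN ?gE ?gS ?gW => e0 e1 e2 m1 m2.
    rewrite ?(Hsym t vW vE) ?(Hsym t vS vE) ?(Hsym t vW vS) ?(Hsym t vE vN) ?(Hsym t vW vN) ?(Hsym t vS vN) ?(Hlsym t vW vE) ?(Hlsym t vS vE) ?(Hlsym t vW vS) ?(Hlsym t vE vN) ?(Hlsym t vW vN) ?(Hlsym t vS vN) in e0 e1 e2 m1 m2 *.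
    rewrite e0 e1 e2 -m1 -m2 [tedge D t vN vS == e]eq_sym; ring.
  + move: (Htr vW vS isT isT isT) (Htr vW vE isT isT isT) (Htr vS vE isT isT isT)
       (Hm vW vE vW vS isT isT isT isT isT isT) (Hm vS vE vW vS isT isT isT isT isT isT).
    rewrite ?gN ?gE ?gS ?gW => e0 e1 e2 m1 m2.
    rewrite ?(Hsym t vW vE) ?(Hsym t vS vE) ?(Hsym t vW vS) ?(Hsym t vE vN) ?(Hsym t vW vN) ?(Hsym t vS vN) ?(Hlsym t vW vE) ?(Hlsym t vS vE) ?(Hlsym t vW vS) ?(Hlsym t vE vN) ?(Hlsym t vW vN) ?(Hlsym t vS vN) in e0 e1 e2 m1 m2 *.
    rewrite e0 e1 e2 -m1 -m2 [tedge D t vN vS == e]eq_sym; ring.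
Qed.

Theorem mainTheorem3 (T Ed F : finType) (D : triangulation_data T Ed F)
    (r : nat) (omega : F -> 'rV[int]_r) (lam : T -> 'I_4 -> 'I_4 -> 'rV[int]_r) :
  is_veering D -> H1_basis D omega -> lift_data D omega lam ->
  (exists C : 'M[KG r]_(#|Ed|, #|F|),
      (forall i j, inZG (C i j)) /\ Lmx D lam = C *m Ltrimx D lam) /\
  (forall theta : KG r, is_gcdZG (Ltri_minor D lam) theta ->
      dvdZG theta (veering_poly D lam)).
Proof.
move=> Hv _ Hl.
have Hv' := Hv.
move: Hv' => [_ [_ [_ [_ [_ [_ [_ [_ [_ [[binv Hb1 Hb2] _]]]]]]]]]].
pose vt (b : Ed) := veer D (tedge D (binv b) vE vW).
pose f1 (b : Ed) := tface D (binv b) (if vt b then vW else vE).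
pose f2 (b : Ed) := tface D (binv b) vN.
pose m (b : Ed) : KG r := mono (if vt b then lam (binv b) vE vS - lam (binv b) vN vS
        else lam (binv b) vS vW - lam (binv b) vN vS).
pose Ccoef (b : Ed) (f : F) : KG r := (f == f1 b)%:R + (f == f2 b)%:R * m b.
have row_rel : forall b e, Lcoef D lam b e =
    Ltricoef D lam (f1 b) e + m b * Ltricoef D lam (f2 b) e.
  move=> b e; rewrite /f1 /f2 /m /vt.
  have Hb := Hb2 b; move: (binv b) Hb => t0 Hb; subst b.
  rewrite /Lcoef (big_pred1 t0); last first.
    move=> t /=; apply/eqP/eqP => [H|->] //.
    by rewrite -(Hb1 t) H Hb1.
  by rewrite (@tetra_rel _ _ _ D r omega lam Hv Hl).
pose C : 'M[KG r]_(#|Ed|, #|F|) := \matrix_(i, j) Ccoef (enum_val i) (enum_val j).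
have HC : forall i j, inZG (C i j).
  move=> i j; rewrite mxE /Ccoef; apply: inZG_add.
    by case: (_ == _); [exact: inZG1 | exact: inZG0].
  apply: inZG_mul; last exact: inZG_mono.
  by case: (_ == _); [exact: inZG1 | exact: inZG0].
have HL : Lmx D lam = C *m Ltrimx D lam.
  apply/matrixP => i k; rewrite !mxE row_rel.
  under eq_bigr do rewrite !mxE.
  rewrite -(big_enum_val (fun f => Ccoef (enum_val i) f * Ltricoef D lam f (enum_val k))).
  rewrite /Ccoef; under eq_bigr do rewrite mulrDl.
  rewrite big_split /= (bigD1 (f1 (enum_val i))) //= eqxx mul1r big1 ?addr0; last first.
    by move=> f /negbTE ->; rewrite mul0r.
  rewrite (bigD1 (f2 (enum_val i))) //= eqxx mul1r big1 ?addr0 //.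
  by move=> f /negbTE ->; rewrite !mul0r.
split; first by exists C.
move=> theta [_ [Hdiv _]].
rewrite /veering_poly HL det_mul_expand.
apply: dvdZG_sum => f _; apply: dvdZG_mull; first by apply: inZG_prod => i _.
case: (boolP (injectiveb f)) => [/injectiveP Uf | Nf].
  by apply: Hdiv; exists (fun i => f i).
case/injectivePn: Nf => i1 [i2 Di12 Ef12].
rewrite (determinant_alternate Di12); first exact: dvdZG0.
move=> j.
by rewrite !mxE Ef12.
Qed.
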